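(* Let $\Phi$ be a real, additive gain graph on $V=\{1,\dots,n\}$ and suppose $\mathbf{Q}=(Q_1,\dots,Q_n)\in(\mathbb{E}^d)^n$ has ideal general position. Let $s$ be a flat of $\mathcal{H}(\Phi;\mathbf{Q})$ that is not a point. Then for $i,j\in V$, $\mathrm{proj}_s Q_i=\mathrm{proj}_s Q_j$ if and only if $i$ and $j$ lie in the same connected component of $(V,E(s))$.
   Context: A real, additive gain graph $\Phi$ on $V$: finite graph with edge set $E$ (multiple edges allowed, every edge with two distinct endpoints) and gains $\phi(e;i,j)\in\mathbb{R}$ with $\phi(e;j,i)=-\phi(e;i,j)$. With $\psi_{ij}(P)=d(P,Q_i)^2-d(P,Q_j)^2$, $\mathcal{H}(\Phi;\mathbf{Q})$ consists of hyperplanes $h(e)=\{P:\psi_{ij}(P)=\phi(e;i,j)\}$ for edges $e$ with endpoints $i,j$. A flat of $\mathcal{H}$ is a nonempty intersection of a subset of $\mathcal{H}$; $E(s)=\{e\in E:h(e)\supseteq s\}$. $\mathrm{proj}_s P$ is the orthogonal projection of $P$ onto $s$. Ideal general position: the points are distinct and, with $\mathbb{E}^d\subset\mathbb{P}^d$, $h_\infty$ the ideal hyperplane and $p_{ij}$ the ideal point of line $Q_iQ_j$, for every set $T$ of unordered pairs the projective span of $\{p_{ij}:\{i,j\}\in T\}$ has dimension $\min(n-c(T),d)-1$, where $c(T)$ is the number of components of $(\{1,\dots,n\},T)$, isolated vertices included. *)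

(* Defs.v *)
From HB Require Import structures.
From mathcomp Require Import all_boot all_order all_algebra.
From mathcomp Require Import boolp classical_sets reals.
From Stdlib Require Import ClassicalEpsilon.
Set Implicit Arguments. Unset Strict Implicit. Unset Printing Implicit Defensive.
Import Order.TTheory GRing.Theory Num.Theory.
Local Open Scope ring_scope.

Section Defs.
Variable R : realType.

Definition dotp (d : nat) (u v : 'rV[R]_d) : R := \sum_(k < d) u ord0 k * v ord0 k.
Definition dist2 (d : nat) (P X : 'rV[R]_d) : R := dotp (P - X) (P - X).

(* A real additive gain graph on V = 'I_n: a finite edge type E (multiple edges
   allowed), each edge e oriented from [src e] to [tgt e] (distinct), with gain
   phi(e; src e, tgt e) = gain e, hence phi(e; tgt e, src e) = - gain e. *)
Definition phi (n : nat) (E : finType) (src tgt : E -> 'I_n) (gain : E -> R)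
  (e : E) (i j : 'I_n) : R :=
  if (i == src e) && (j == tgt e) then gain e else - gain e.

Definition psi (n d : nat) (Q : 'I_n -> 'rV[R]_d) (i j : 'I_n) (P : 'rV[R]_d) : R :=
  dist2 P (Q i) - dist2 P (Q j).

Definition hyp (n d : nat) (E : finType) (src tgt : E -> 'I_n) (gain : E -> R)
  (Q : 'I_n -> 'rV[R]_d) (e : E) : set 'rV[R]_d :=
  fun P => psi Q (src e) (tgt e) P = phi src tgt gain e (src e) (tgt e).

Definition is_flat (n d : nat) (E : finType) (src tgt : E -> 'I_n) (gain : E -> R)
  (Q : 'I_n -> 'rV[R]_d) (s : set 'rV[R]_d) : Prop :=
  (exists S : {set E}, s = (fun P => forall e, e \in S -> hyp src tgt gain Q e P))
  /\ (exists P, s P).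

Definition is_point (d : nat) (s : set 'rV[R]_d) : Prop := exists P, s = (fun X => X = P).

Definition Es (n d : nat) (E : finType) (src tgt : E -> 'I_n) (gain : E -> R)
  (Q : 'I_n -> 'rV[R]_d) (s : set 'rV[R]_d) : {set E} :=
  [set e | `[< forall P, s P -> hyp src tgt gain Q e P >]].

Definition edge_rel (n : nat) (E : finType) (src tgt : E -> 'I_n) (F : {set E}) : rel 'I_n :=
  fun i j => [exists e in F, ((src e == i) && (tgt e == j)) || ((src e == j) && (tgt e == i))].

Definition is_proj (d : nat) (s : set 'rV[R]_d) (P X : 'rV[R]_d) : Prop :=
  s X /\ forall Y Z, s Y -> s Z -> dotp (P - X) (Y - Z) = 0.

Definition proj (d : nat) (s : set 'rV[R]_d) (P : 'rV[R]_d) : 'rV[R]_d :=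
  epsilon (inhabits 0) (is_proj s P).

(* The ideal point p_ij of line Q_iQ_j is the direction
   [Q_i - Q_j]; the projective span of a set of ideal points has dimension
   (dim of the linear span of the directions) - 1.  Unordered pairs {i,j} are
   represented by ordered pairs (i, j) with i < j. *)
Definition pair_rel (n : nat) (T : {set 'I_n * 'I_n}) : rel 'I_n :=
  fun i j => ((i, j) \in T) || ((j, i) \in T).

Definition ncomp (n : nat) (T : {set 'I_n * 'I_n}) : nat :=
  n_comp (pair_rel T) 'I_n.

Definition ideal_span_dim (n d : nat) (Q : 'I_n -> 'rV[R]_d) (T : {set 'I_n * 'I_n}) : int :=
  (\rank (\sum_(p in T) <<Q p.1 - Q p.2>>)%MS)%:Z - 1.

Definition ideal_general_position (n d : nat) (Q : 'I_n -> 'rV[R]_d) : Prop :=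
  injective Q /\
  forall T : {set 'I_n * 'I_n}, (forall p, p \in T -> (p.1 < p.2)%N) ->
    ideal_span_dim Q T = (minn (n - ncomp T) d)%:Z - 1.

End Defs.

(* Main.v *)
Require Import Defs.
From HB Require Import structures.
From mathcomp Require Import all_boot all_order all_algebra.
From mathcomp Require Import boolp classical_sets reals.
From mathcomp Require Import ring lra zify.
From Stdlib Require Import ClassicalEpsilon.
Set Implicit Arguments. Unset Strict Implicit. Unset Printing Implicit Defensive.
Import Order.TTheory GRing.Theory Num.Theory.
Local Open Scope ring_scope.

Section Aux.
Variable R : realType.
Variable d : nat.
Implicit Types u v w : 'rV[R]_d.

Lemma dotpE u v : dotp u v = (u *m v^T) ord0 ord0.
Proof. by rewrite /dotp !mxE; apply: eq_bigr => k _; rewrite !mxE. Qed.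

Lemma dotpC u v : dotp u v = dotp v u.
Proof. by rewrite /dotp; apply: eq_bigr => k _; rewrite mulrC. Qed.

Lemma dotpDl u v w : dotp (u + v) w = dotp u w + dotp v w.
Proof. by rewrite /dotp -big_split; apply: eq_bigr => k _; rewrite !mxE mulrDl. Qed.

Lemma dotpNl u w : dotp (- u) w = - dotp u w.
Proof. by rewrite /dotp -sumrN; apply: eq_bigr => k _; rewrite !mxE mulNr. Qed.

Lemma dotpZl a u w : dotp (a *: u) w = a * dotp u w.
Proof. by rewrite /dotp mulr_sumr; apply: eq_bigr => k _; rewrite !mxE mulrA. Qed.

Lemma dotpBl u v w : dotp (u - v) w = dotp u w - dotp v w.
Proof. by rewrite dotpDl dotpNl. Qed.

Lemma dotpDr u v w : dotp w (u + v) = dotp w u + dotp w v.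
Proof. by rewrite dotpC dotpDl !(dotpC w). Qed.

Lemma dotpNr u w : dotp w (- u) = - dotp w u.
Proof. by rewrite dotpC dotpNl dotpC. Qed.

Lemma dotpBr u v w : dotp w (u - v) = dotp w u - dotp w v.
Proof. by rewrite dotpDr dotpNr. Qed.

Lemma dotp0l w : dotp 0 w = 0.
Proof. by rewrite /dotp big1 // => k _; rewrite mxE mul0r. Qed.

Lemma dotp0r w : dotp w 0 = 0.
Proof. by rewrite dotpC dotp0l. Qed.

Lemma dotp_self_eq0 u : dotp u u = 0 -> u = 0.
Proof.
move=> H; apply/rowP => k; rewrite mxE.
have /eqP := H; rewrite /dotp psumr_eq0 => [/allP Hall|i _]; last by rewrite -expr2 sqr_ge0.
have := Hall k (mem_index_enum k); rewrite /= -expr2 sqrf_eq0 => /eqP ->.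
by [].
Qed.

Lemma dist2E (P X : 'rV[R]_d) : dist2 P X = dotp P P - 2 * dotp P X + dotp X X.
Proof.
rewrite /dist2 dotpBl !dotpBr (dotpC X P); ring.
Qed.

Lemma mulmx_tr_eq0 m (B : 'M[R]_(m, d)) : B *m B^T = 0 -> B = 0.
Proof.
move=> H; apply/matrixP => r k.
have : dotp (row r B) (row r B) = 0.
  have := congr1 (fun M : 'M[R]_m => M r r) H; rewrite !mxE => <-.
  by rewrite /dotp; apply: eq_bigr => j _; rewrite !mxE.
by move/dotp_self_eq0/rowP/(_ k); rewrite !mxE.
Qed.


Lemma mulmx_tr_dotp (u z : 'rV[R]_d) : (u *m z^T == 0) = (dotp u z == 0).
Proof.
rewrite dotpE; apply/eqP/eqP => [->|H]; first by rewrite mxE.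
by apply/matrixP => a b; rewrite !ord1 H mxE.
Qed.

Lemma orth_sub m (M : 'M[R]_(m, d)) (r u : 'rV[R]_d) :
  r *m M^T = 0 -> (u <= M)%MS -> dotp r u = 0.
Proof.
move=> H /submxP [x ->]; apply/eqP; rewrite -mulmx_tr_dotp.
by rewrite trmx_mul mulmxA H mul0mx.
Qed.

Lemma orth_sum (I : finType) (P : pred I) (g : I -> 'rV[R]_d) z :
  (forall i, P i -> dotp z (g i) = 0) ->
  forall u, (u <= \sum_(i | P i) <<g i>>)%MS -> dotp z u = 0.
Proof.
move=> H u Hu.
have : (\sum_(i | P i) <<g i>> <= kermx z^T)%MS.
  apply/sumsmx_subP => i Pi; rewrite genmxE sub_kermx mulmx_tr_dotp dotpC.
  by apply/eqP; apply: H.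
move=> /(submx_trans Hu); rewrite sub_kermx mulmx_tr_dotp dotpC => /eqP //.
Qed.

Lemma decomp m (M : 'M[R]_(m, d)) (p : 'rV[R]_d) :
  exists u, (u <= M)%MS /\ (p - u) *m M^T = 0.
Proof.
set G := M *m M^T.
have GM : (G <= M^T)%MS by apply: submxMl.
have kerGM : (kermx G <= kermx M)%MS.
  rewrite sub_kermx; apply/eqP; apply: mulmx_tr_eq0.
  rewrite trmx_mul mulmxA -(mulmxA _ M) -/G.
  by have := submx_refl (kermx G); rewrite sub_kermx => /eqP ->; rewrite mul0mx.
have rk : (\rank M <= \rank G)%N.
  have := mxrankS kerGM; rewrite !mxrank_ker.
  have := rank_leq_row G; have := rank_leq_row M; lia.
have MG : (M^T <= G)%MS.
  have [le1 <-] := mxrank_leqif_sup GM; rewrite eqn_leq le1 /= mxrank_tr; exact: rk.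
have : (p *m M^T <= G)%MS by apply: submx_trans (submxMl _ _) MG.
case/submxP => x Hx; exists (x *m M); split; first exact: submxMl.
by rewrite mulmxBl Hx -mulmxA subrr.
Qed.

End Aux.

Section Graph.
Variable T : finType.

Lemma n_comp_lt (r r' : rel T) (i j : T) :
  symmetric r -> symmetric r' -> subrel r r' -> r' i j -> ~~ connect r i j ->
  (n_comp r' T < n_comp r T)%N.
Proof.
move=> sr sr' sub rij nc.
have csr := sym_connect_sym sr; have csr' := sym_connect_sym sr'.
have cc : subrel (connect r) (connect r').
  by apply: connect_sub => x y /sub; apply: connect1.
rewrite /n_comp_mem.
set A := [set x | roots r x].
set g := fingraph.root r'.
have e1 : #|predI (roots r) (mem T)| = #|A|.
  by apply: eq_card => x; rewrite !inE andbT.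
have e2 : (#|predI (roots r') (mem T)| <= #|g @: A|)%N.
  apply: subset_leq_card; apply/fintype.subsetP => x; rewrite !inE andbT => /eqP rx.
  apply/imsetP; exists (fingraph.root r x); first by rewrite inE roots_root.
  rewrite /g -{1}rx; apply/(fingraph.rootP csr'); apply: cc.
  exact: connect_root.
have gr : forall x, g (fingraph.root r x) = g x.
  move=> x; apply/esym/(fingraph.rootP csr'); apply: cc; exact: connect_root.
rewrite e1 (leq_ltn_trans e2) // ltn_neqAle leq_imset_card andbT.
apply/imset_injP => inj.
have : fingraph.root r i = fingraph.root r j.
  apply: inj; rewrite ?inE ?roots_root //.
  by rewrite !gr; apply/(fingraph.rootP csr'); apply: connect1.
by move/eqP; rewrite root_connect // (negbTE nc).
Qed.

End Graph.

Section Main.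
Variables (R : realType) (n d : nat) (E : finType) (src tgt : E -> 'I_n)
  (gain : E -> R) (Q : 'I_n -> 'rV[R]_d).

Lemma psi_diff a b P P' :
  psi Q a b P - psi Q a b P' = -2 * dotp (P - P') (Q a - Q b).
Proof.
rewrite /psi !dist2E !dotpBl !dotpBr; ring.
Qed.

Definition Tof (r : rel 'I_n) : {set 'I_n * 'I_n} :=
  [set p : 'I_n * 'I_n | (p.1 < p.2)%N && r p.1 p.2].

Lemma pair_Tof r : symmetric r -> irreflexive r -> pair_rel (Tof r) =2 r.
Proof.
move=> sr ir a b; rewrite /pair_rel !inE /=.
case: (ltngtP a b) => [lt|gt|eq] /=; rewrite ?orbF //.
have -> : a = b by apply: val_inj.
by rewrite ir.

Qed.


Lemma vec_id1 (a b c : 'rV[R]_d) : a - c - (a - b) = b - c.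
Proof. by apply/rowP => k; rewrite !mxE; ring. Qed.
Lemma vec_id2 (a b : 'rV[R]_d) : a + b - a = b.
Proof. by apply/rowP => k; rewrite !mxE; ring. Qed.
Lemma vec_id3 (a b c : 'rV[R]_d) : a - (b + (a - b - c)) = c.
Proof. by apply/rowP => k; rewrite !mxE; ring. Qed.
Lemma vec_id4 (a b c : 'rV[R]_d) : a - c = (a - b) + (b - c).
Proof. by apply/rowP => k; rewrite !mxE; ring. Qed.

End Main.

Theorem corollary6p16 (R : realType) (n d : nat) (E : finType)
  (src tgt : E -> 'I_n) (gain : E -> R) (Q : 'I_n -> 'rV[R]_d) :
  (forall e, src e != tgt e) ->
  ideal_general_position Q ->
  forall s : set 'rV[R]_d,
    is_flat src tgt gain Q s -> ~ is_point s ->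
    forall i j : 'I_n,
      proj s (Q i) = proj s (Q j) <->
      connect (edge_rel src tgt (Es src tgt gain Q s)) i j.
Proof.
move=> hne [Qinj GP] s [[S hs] [P0 sP0]] npt i j.
set F := Es src tgt gain Q s.
set r := edge_rel src tgt F.
pose nrm e := Q (src e) - Q (tgt e).
have SF : forall e, e \in S -> e \in F.
  move=> e eS; rewrite inE; apply/asboolP => P; rewrite hs; exact.
have F1 : forall Y Z e, s Y -> s Z -> e \in F -> dotp (Y - Z) (nrm e) = 0.
  move=> Y Z e sY sZ; rewrite inE => /asboolP H.
  have hY := H Y sY; have hZ := H Z sZ; rewrite /hyp in hY hZ.
  have := psi_diff Q (src e) (tgt e) Y Z; rewrite hY hZ subrr => /esym/eqP.
  rewrite mulf_eq0 => /orP [|/eqP //].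
  by rewrite oppr_eq0 pnatr_eq0.
have F2 : forall Y v, s Y -> (forall e, e \in S -> dotp v (nrm e) = 0) -> s (Y + v).
  move=> Y v sY Hv; move: sY; rewrite hs => sY e eS.
  have := psi_diff Q (src e) (tgt e) (Y + v) Y; rewrite vec_id2 Hv // mulr0.
  move/eqP; rewrite subr_eq0 => /eqP; rewrite /hyp => ->; exact: sY.
have sr : symmetric r.
  move=> a b; apply/existsP/existsP => [[e He]|[e He]]; exists e; by move: He; rewrite orbC.
have ir : irreflexive r.
  move=> a; apply/existsP => [[e /andP [_]]]; rewrite orbb => /andP [/eqP h1 /eqP h2].
  by move: (hne e); rewrite h1 h2 eqxx.
pose M := (\sum_(p in Tof r) <<Q p.1 - Q p.2>>)%MS.
have edgeO : forall a b Y Z, r a b -> s Y -> s Z -> dotp (Y - Z) (Q a - Q b) = 0.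
  move=> a b Y Z /existsP [e /andP [eF /orP [/andP[/eqP h1 /eqP h2]|/andP[/eqP h1 /eqP h2]]]] sY sZ.
  - rewrite -h1 -h2; exact: F1.
  - by rewrite -h1 -h2 -[Q (tgt e) - _]opprB dotpNr F1 ?oppr0.
have Mperp : forall Y Z u, s Y -> s Z -> (u <= M)%MS -> dotp (Y - Z) u = 0.
  move=> Y Z u sY sZ Hu; apply: orth_sum _ u Hu => p; rewrite inE => /andP [_ rp].
  exact: edgeO.
have nrmM : forall e, e \in F -> (nrm e <= M)%MS.
  move=> e eF; case: (ltngtP (src e) (tgt e)) => [lt|gt|eq].
  - apply: (sumsmx_sup (src e, tgt e)); last by rewrite genmxE.
    by rewrite inE /= lt /=; apply/existsP; exists e; rewrite eF !eqxx.
  - have -> : nrm e = (-1) *: (Q (tgt e) - Q (src e)) by rewrite scaleN1r opprB.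
    apply: scalemx_sub; apply: (sumsmx_sup (tgt e, src e)); last by rewrite genmxE.
    by rewrite inE /= gt /=; apply/existsP; exists e; rewrite eF !eqxx orbT.
  - by have := hne e; rewrite (_ : src e = tgt e) ?eqxx //; apply: val_inj.
have projex : forall P, exists X, is_proj s P X.
  move=> P; have [u [uM hu]] := decomp M (P - P0).
  exists (P0 + (P - P0 - u)); split.
  - by apply: F2 => // e eS; apply: orth_sub hu (nrmM e (SF e eS)).
  - by move=> Y Z sY sZ; rewrite vec_id3 dotpC; apply: Mperp.
have projP : forall P, is_proj s P (proj s P).
  by move=> P; apply: epsilon_spec; apply: projex.
have uniq : forall P X1 X2, is_proj s P X1 -> is_proj s P X2 -> X1 = X2.
  move=> P X1 X2 [s1 h1] [s2 h2]; apply/eqP; rewrite -subr_eq0; apply/eqP/dotp_self_eq0.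
  rewrite {1}(_ : X1 - X2 = (P - X2) - (P - X1)); last by rewrite vec_id1.
  by rewrite dotpBl h1 ?h2 // subrr.
pose Orth w := forall Y Z, s Y -> s Z -> dotp w (Y - Z) = 0.
have projeq : proj s (Q i) = proj s (Q j) <-> Orth (Q i - Q j).
  split.
  - move=> H Y Z sY sZ; have [_ hi] := projP (Q i); have [_ hj] := projP (Q j).
    rewrite (vec_id4 (Q i) (proj s (Q i)) (Q j)) dotpDl hi // H add0r.
    by rewrite -[proj s (Q j) - _]opprB dotpNl hj // oppr0.
  - move=> H; apply: uniq (projP (Q i)) _; split; first by case: (projP (Q j)).
    move=> Y Z sY sZ; rewrite (vec_id4 (Q i) (Q j)) dotpDl H // add0r.
    by case: (projP (Q j)) => _; apply.
rewrite projeq; split; last first.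
  move/connectP => [p pth ->] {projeq}.
  elim: p i pth => [|b p IH] a /=.
    by move=> _ Y Z _ _; rewrite subrr dotp0l.
  move/andP => [rab pth] Y Z sY sZ.
  rewrite (vec_id4 (Q a) (Q b)) dotpDl IH // addr0 dotpC; exact: edgeO.
move=> O; apply/negPn/negP => nc.
have nij : i != j by apply: contraNneq nc => ->; exact: connect0.
have wM : (Q i - Q j <= M)%MS.
  have [u [uM hu]] := decomp M (Q i - Q j).
  set rr := Q i - Q j - u in hu.
  have srr : s (P0 + rr).
    by apply: F2 => // e eS; apply: orth_sub hu (nrmM e (SF e eS)).
  have h0 := O (P0 + rr) P0 srr sP0; rewrite vec_id2 in h0.
  have h1 : dotp rr u = 0 := orth_sub hu uM.
  have : dotp rr rr = 0 by rewrite {2}/rr dotpBr h1 subr0 dotpC.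
  by move/dotp_self_eq0/eqP; rewrite /rr subr_eq0 => /eqP ->.
pose r' := fun a b => [|| r a b, (a == i) && (b == j) | (a == j) && (b == i)].
have sr' : symmetric r'.
  by move=> a b; rewrite /r' sr; case: (a == i); case: (a == j); case: (b == i); case: (b == j); rewrite /= ?orbT ?orbF.
have ir' : irreflexive r'.
  move=> a; rewrite /r' ir /=; apply/negP => /orP [] /andP [/eqP -> /eqP h];
  by move: nij; rewrite h eqxx.
pose M' := (\sum_(p in Tof r') <<Q p.1 - Q p.2>>)%MS.
have MM' : (M <= M')%MS.
  apply/sumsmx_subP => p; rewrite inE => /andP [lt rp].
  by apply: (sumsmx_sup p); rewrite ?inE ?lt /r' ?rp.
have M'M : (M' <= M)%MS.
  apply/sumsmx_subP => p; rewrite inE => /andP [lt /orP [rp|/orP [] /andP [/eqP h1 /eqP h2]]].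
  - by apply: (sumsmx_sup p); rewrite ?inE ?lt ?rp.
  - by rewrite genmxE h1 h2.
  - by rewrite genmxE h1 h2 -opprB -scaleN1r; apply: scalemx_sub.
have rkeq : \rank M' = \rank M by apply/eqP; rewrite eqn_leq !mxrankS.
have hT : forall (rr : rel 'I_n) p, p \in Tof rr -> (p.1 < p.2)%N.
  by move=> rr p; rewrite inE => /andP [].
have GPr := GP (Tof r) (hT r); have GPr' := GP (Tof r') (hT r').
move: GPr GPr'; rewrite /ideal_span_dim -/M -/M' => /addIr/eqP; rewrite eqz_nat => /eqP e1.
move=> /addIr/eqP; rewrite eqz_nat => /eqP e2.
have c1 : ncomp (Tof r) = n_comp r 'I_n.
  by apply: eq_n_comp => a b; apply: eq_connect; apply: pair_Tof.
have c2 : ncomp (Tof r') = n_comp r' 'I_n.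
  by apply: eq_n_comp => a b; apply: eq_connect; apply: pair_Tof.
have lt : (n_comp r' 'I_n < n_comp r 'I_n)%N.
  apply: (@n_comp_lt _ r r' i j) => //.
    by move=> a b rab; rewrite /r' rab.
  by rewrite /r' !eqxx orbT.
have le : (n_comp r 'I_n <= n)%N.
  by rewrite /n_comp_mem -[X in (_ <= X)%N]card_ord; apply: max_card.
have rkd : \rank M = d.
  move: e1 e2; rewrite c1 c2 rkeq => e1 e2; rewrite e1; lia.
apply: npt; exists P0; apply: funext => Y; apply: propext; split => [sY|->//].
have full : row_full M by rewrite /row_full rkd.
have := Mperp Y P0 (Y - P0) sY sP0 (submx_full _ full).
by move/dotp_self_eq0/eqP; rewrite subr_eq0 => /eqP.
Qed.
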